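(* In $TTR$: (1) If $A$ is a without-arrow type of kind 1 and $A\subseteq B$, then $B$ is a without-arrow type of kind 1 and $At(A)=At(B)$. (2) If $A$ is a without-arrow type of kind 2, then $A\subseteq B$ for every type $B$.
   Context: $TTR$ types: over a second-order language with first-order variables, function symbols, $n$-ary predicate variables and symbols, and a fixed system $\mathbf E$ of equations; atomic $\perp$ and $X(t_1,\dots,t_n)$; constructors $\to$, $\forall x$, $\forall X$, and $\mu Cx_1\dots x_nA\langle t_1,\dots,t_n\rangle$ for $C$ an $n$-ary predicate symbol occurring and positive in $A$ (bound in it). Subtyping $\subseteq$ is the least relation closed under: $A\subseteq A$; from $A\subseteq A'$, $B\subseteq B'$ infer $A'\to B\subseteq A\to B'$; from $A[G/v]\subseteq B$ infer $\forall vA\subseteq B$ ($G$ a term if $v$ first-order, a formula if $v$ a predicate variable); from $A\subseteq B$ infer $A\subseteq\forall vB$ if $v$ not free in $A$; from $A\subseteq B[v/y]$ infer $A\subseteq B[w/y]$ if $v=w$ is an instance of an equation of $\mathbf E$; transitivity; $D[\mu C\bar xD\langle\bar z\rangle/C(\bar z)][\bar t/\bar x]\subseteq\mu C\bar xD\langle\bar t\rangle$ and its converse; from $D[E/C(\bar x)]\subseteq E$ infer $\mu C\bar xD\langle\bar t\rangle\subseteq E[\bar t/\bar x]$. A without-arrow type is a type containing no arrow $\to$. Each without-arrow type $A$ contains a unique atomic formula $X(t_1,\dots,t_n)$, and $At(A)$ denotes this $X$. $A$ is of kind 1 if $At(A)$ is free in $A$, and of kind 2 if $At(A)$ is bound in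 $A$. *)

(* Defs.v *)
(* Syntax and subtyping of the system TTR, with de Bruijn
   indices (two independent index spaces: first-order variables and
   predicate variables/symbols). *)
From Stdlib Require Import List Arith.
Import ListNotations.

Inductive term : Type :=
| TVar (i : nat)
| TFn (f : nat) (args : list term).

Fixpoint tsubst (s : nat -> term) (t : term) : term :=
  match t with
  | TVar i => s i
  | TFn f ts => TFn f (map (tsubst s) ts)
  end.

(** Types.
    - [Bot]            : ⊥
    - [PAt X ts]       : X(t1,...,tn), X a predicate de Bruijn index
    - [Arr A B]        : A → B
    - [FAll A]         : ∀x A   (binds first-order index 0)
    - [PAll n A]       : ∀X A, X n-ary (binds predicate index 0)
    - [Mu A ts]        : μ C x1..xn A <t1..tn>, with n = length ts; binds
                         predicate index 0 (= C) and first-order indices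
                         0..n-1 (= x1..xn, x_{k+1} at index k) in A. *)
Inductive formula : Type :=
| Bot
| PAt (X : nat) (ts : list term)
| Arr (A B : formula)
| FAll (A : formula)
| PAll (n : nat) (A : formula)
| Mu (A : formula) (ts : list term).

Definition upn (k : nat) (s : nat -> term) : nat -> term :=
  fun i => if i <? k then TVar i
           else tsubst (fun j => TVar (j + k)) (s (i - k)).

Fixpoint fsubst_fo (s : nat -> term) (A : formula) : formula :=
  match A with
  | Bot => Bot
  | PAt X ts => PAt X (map (tsubst s) ts)
  | Arr A B => Arr (fsubst_fo s A) (fsubst_fo s B)
  | FAll A => FAll (fsubst_fo (upn 1 s) A)
  | PAll n A => PAll n (fsubst_fo s A)
  | Mu A ts => Mu (fsubst_fo (upn (length ts) s) A) (map (tsubst s) ts)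
  end.

Definition uprn (r : nat -> nat) : nat -> nat :=
  fun j => match j with 0 => 0 | S j => S (r j) end.

Fixpoint fren_pr (r : nat -> nat) (A : formula) : formula :=
  match A with
  | Bot => Bot
  | PAt X ts => PAt (r X) ts
  | Arr A B => Arr (fren_pr r A) (fren_pr r B)
  | FAll A => FAll (fren_pr r A)
  | PAll n A => PAll n (fren_pr (uprn r) A)
  | Mu A ts => Mu (fren_pr (uprn r) A) ts
  end.

(** What a predicate variable is replaced by: another predicate variable,
    or a formula abstraction  λ z1..zn. G  (the z's are first-order indices
    0..n-1 of G; indices >= n of G refer to the ambient context). *)
Inductive ppat : Type :=
| PV (j : nat)
| PL (n : nat) (G : formula).

Definition inst_args (n : nat) (ts : list term) : nat -> term :=
  fun i => if i <? n then nth i ts (TVar 0) else TVar (i - n).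

Definition papp (p : ppat) (ts : list term) : formula :=
  match p with
  | PV j => PAt j ts
  | PL n G => fsubst_fo (inst_args n ts) G
  end.

Definition pshift_fo (k : nat) (p : ppat) : ppat :=
  match p with
  | PV j => PV j
  | PL n G => PL n (fsubst_fo (fun i => if i <? n then TVar i else TVar (i + k)) G)
  end.

Definition pshift_pr (p : ppat) : ppat :=
  match p with
  | PV j => PV (S j)
  | PL n G => PL n (fren_pr S G)
  end.

Definition up_pr (t : nat -> ppat) : nat -> ppat :=
  fun j => match j with 0 => PV 0 | S j => pshift_pr (t j) end.

Fixpoint fsubst_pr (t : nat -> ppat) (A : formula) : formula :=
  match A with
  | Bot => Bot
  | PAt X ts => papp (t X) ts
  | Arr A B => Arr (fsubst_pr t A) (fsubst_pr t B)
  | FAll A => FAll (fsubst_pr (fun j => pshift_fo 1 (t j)) A)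
  | PAll n A => PAll n (fsubst_pr (up_pr t) A)
  | Mu A ts => Mu (fsubst_pr (fun j => pshift_fo (length ts) (up_pr t j)) A) ts
  end.

Definition fshift_fo (A : formula) : formula := fsubst_fo (fun i => TVar (S i)) A.
Definition fshift_pr (A : formula) : formula := fren_pr S A.

Definition inst1 (u : term) : nat -> term :=
  fun i => match i with 0 => u | S i => TVar i end.

Definition instp (n : nat) (G : formula) : nat -> ppat :=
  fun j => match j with 0 => PL n G | S j => PV j end.

(** D[μC x̄ D<z̄> / C(z̄)][t̄/x̄]  for the type  μC x̄ D <t̄>  (n = length t̄). *)
Definition mu_unfold (D : formula) (ts : list term) : formula :=
  let n := length ts in
  fsubst_fo (inst_args n ts)
    (fsubst_pr
       (fun j => match j with
                 | 0 => PL n (Mu (fsubst_fo (fun i => if i <? n then TVar i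
                                                       else TVar (i + 2 * n)) D)
                                 (map TVar (seq 0 n)))
                 | S j => PV j
                 end) D).

(** D[E/C(x̄)] where x̄ (first-order indices 0..n-1) are the variables of the
    μ-binder and may occur free in E. *)
Definition mu_ind_body (D : formula) (n : nat) (E : formula) : formula :=
  fsubst_pr
    (fun j => match j with
              | 0 => PL n (fsubst_fo (fun i => if i <? n then TVar i else TVar (i + n)) E)
              | S j => PV j
              end) D.

Fixpoint occurs (k : nat) (A : formula) : Prop :=
  match A with
  | Bot => False
  | PAt X _ => X = k
  | Arr A B => occurs k A \/ occurs k B
  | FAll A => occurs k A
  | PAll _ A => occurs (S k) A
  | Mu A _ => occurs (S k) A
  end.

(** [polok p k A]: every occurrence of k in A has polarity p
    (p = true: positive). *)
Fixpoint polok (p : bool) (k : nat) (A : formula) : Prop :=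
  match A with
  | Bot => True
  | PAt X _ => p = true \/ X <> k
  | Arr A B => polok (negb p) k A /\ polok p k B
  | FAll A => polok p k A
  | PAll _ A => polok p (S k) A
  | Mu A _ => polok p (S k) A
  end.

Fixpoint ttype (A : formula) : Prop :=
  match A with
  | Bot => True
  | PAt _ _ => True
  | Arr A B => ttype A /\ ttype B
  | FAll A => ttype A
  | PAll _ A => ttype A
  | Mu A _ => ttype A /\ occurs 0 A /\ polok true 0 A
  end.

Definition eq_instance (Eqs : term -> term -> Prop) (v w : term) : Prop :=
  exists l r (s : nat -> term), Eqs l r /\ v = tsubst s l /\ w = tsubst s r.

Inductive sub (Eqs : term -> term -> Prop) : formula -> formula -> Prop :=
| St_refl A : ttype A -> sub Eqs A A
| St_arr A A' B B' : sub Eqs A A' -> sub Eqs B B' -> sub Eqs (Arr A' B) (Arr A B')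
| St_fall_l A B u : sub Eqs (fsubst_fo (inst1 u) A) B -> sub Eqs (FAll A) B
| St_pall_l n A B G : ttype G -> sub Eqs (fsubst_pr (instp n G) A) B ->
    sub Eqs (PAll n A) B
| St_fall_r A B : sub Eqs (fshift_fo A) B -> sub Eqs A (FAll B)
| St_pall_r n A B : sub Eqs (fshift_pr A) B -> sub Eqs A (PAll n B)
| St_eq A B v w : eq_instance Eqs v w -> sub Eqs A (fsubst_fo (inst1 v) B) ->
    sub Eqs A (fsubst_fo (inst1 w) B)
| St_trans A B C : sub Eqs A B -> sub Eqs B C -> sub Eqs A C
| St_fold D ts : ttype (Mu D ts) -> sub Eqs (mu_unfold D ts) (Mu D ts)
| St_unfold D ts : ttype (Mu D ts) -> sub Eqs (Mu D ts) (mu_unfold D ts)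
| St_ind D ts E : ttype (Mu D ts) -> ttype E ->
    sub Eqs (mu_ind_body D (length ts) E) E ->
    sub Eqs (Mu D ts) (fsubst_fo (inst_args (length ts) ts) E).

Fixpoint arrow_free (A : formula) : Prop :=
  match A with
  | Bot => True
  | PAt _ _ => True
  | Arr _ _ => False
  | FAll A => arrow_free A
  | PAll _ A => arrow_free A
  | Mu A _ => arrow_free A
  end.

Definition without_arrow (A : formula) : Prop := ttype A /\ arrow_free A.

(** For an arrow-free A: [Some (j, d)] where X(...) with raw index j is the
    unique atomic formula of A, and d is the number of predicate binders
    above it.  X is free in A iff d <= j, and then its index in the
    context of A is j - d. *)
Fixpoint head_info (A : formula) : option (nat * nat) :=
  match A with
  | Bot => None
  | PAt X _ => Some (X, 0)
  | Arr _ _ => None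
  | FAll A => head_info A
  | PAll _ A => option_map (fun p => (fst p, S (snd p))) (head_info A)
  | Mu A _ => option_map (fun p => (fst p, S (snd p))) (head_info A)
  end.

(** At(A), as a predicate index in the context of A (meaningful when free). *)
Definition At (A : formula) : option nat :=
  option_map (fun p => fst p - snd p) (head_info A).

Definition kind1 (A : formula) : Prop :=
  without_arrow A /\ exists j d, head_info A = Some (j, d) /\ d <= j.

Definition kind2 (A : formula) : Prop :=
  without_arrow A /\ exists j d, head_info A = Some (j, d) /\ j < d.

(* Main.v *)
Require Import Defs.
From Stdlib Require Import List Arith Lia.
Import ListNotations.

Notation Zf := (PAll 0 (PAt 0 nil)).

Fixpoint tsubst_id (s : nat -> term) (Hs : forall i, s i = TVar i) (t : term) {struct t} : tsubst s t = t :=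
  match t return tsubst s t = t with
  | TVar i => Hs i
  | TFn f ts => f_equal (TFn f)
      ((fix go (l : list term) : map (tsubst s) l = l :=
          match l return map (tsubst s) l = l with
          | nil => eq_refl
          | x :: l' => f_equal2 (@cons term) (tsubst_id s Hs x) (go l')
          end) ts)
  end.

Lemma map_tsubst_id s (Hs : forall i, s i = TVar i) l : map (tsubst s) l = l.
Proof. induction l; simpl; f_equal; auto using tsubst_id. Qed.

Lemma upn_id k s : (forall i, s i = TVar i) -> forall i, upn k s i = TVar i.
Proof. intros Hs i; unfold upn. destruct (Nat.ltb_spec i k); auto. rewrite Hs; simpl; f_equal; lia. Qed.

Lemma fsubst_fo_id A : forall s, (forall i, s i = TVar i) -> fsubst_fo s A = A.
Proof.
  induction A; intros s Hs; simpl.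
  - reflexivity.
  - rewrite map_tsubst_id; auto.
  - rewrite IHA1, IHA2; auto.
  - rewrite IHA; auto. apply upn_id; auto.
  - rewrite IHA; auto.
  - rewrite IHA by (apply upn_id; auto). rewrite map_tsubst_id; auto.
Qed.

Lemma head_fo A : forall s, head_info (fsubst_fo s A) = head_info A.
Proof. induction A; intros; simpl; try rewrite IHA; auto. Qed.

Lemma occurs_fo A : forall s k, occurs k (fsubst_fo s A) = occurs k A.
Proof. induction A; intros; simpl; try rewrite IHA1, IHA2; try rewrite IHA; reflexivity. Qed.

Lemma polok_fo A : forall s p k, polok p k (fsubst_fo s A) = polok p k A.
Proof. induction A; intros; simpl; try rewrite IHA1, IHA2; try rewrite IHA; reflexivity. Qed.

Lemma ttype_fo A : forall s, ttype (fsubst_fo s A) = ttype A.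
Proof.
  induction A; intros; simpl; try rewrite IHA1, IHA2; try rewrite IHA; try reflexivity.
  rewrite occurs_fo, polok_fo; reflexivity.
Qed.

Fixpoint sl (A : formula) : nat :=
  match A with
  | FAll A | PAll _ A | Mu A _ => S (sl A)
  | _ => 0
  end.

Lemma sl_fo A : forall s, sl (fsubst_fo s A) = sl A.
Proof. induction A; intros; simpl; try rewrite IHA; reflexivity. Qed.

Lemma head_some_af A : forall p, head_info A = Some p -> arrow_free A.
Proof.
  induction A; simpl; intros p H; try discriminate; auto.
  - eauto.
  - destruct (head_info A) as [q|]; [exact (IHA q eq_refl) | discriminate].
  - destruct (head_info A) as [q|]; [exact (IHA q eq_refl) | discriminate].
Qed.

Lemma polok_af A : forall k, arrow_free A -> polok true k A.
Proof. induction A; simpl; intros; intuition. Qed.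

Lemma head_pr_none A : forall t, head_info A = None -> head_info (fsubst_pr t A) = None.
Proof.
  induction A; intros t H; simpl in *; try discriminate; auto.
  - destruct (head_info A) eqn:E; simpl in H; [discriminate|]. rewrite IHA; auto.
  - destruct (head_info A) eqn:E; simpl in H; [discriminate|]. rewrite IHA; auto.
Qed.

Lemma Occ A : forall j d k, head_info A = Some (j,d) -> (occurs k A <-> j = k + d).
Proof.
  induction A; intros j d k H; simpl in *; try discriminate.
  - injection H as <- <-. split; intro; lia.
  - apply IHA; auto.
  - destruct (head_info A) as [[j' d']|] eqn:E; simpl in H; [|discriminate].
    injection H as <- <-. rewrite (IHA j' d' (S k) eq_refl). split; intro; lia.
  - destruct (head_info A) as [[j' d']|] eqn:E; simpl in H; [|discriminate].
    injection H as <- <-. rewrite (IHA j' d' (S k) eq_refl). split; intro; lia.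
Qed.

Lemma head_ren A : forall r j d, head_info A = Some (j,d) ->
  head_info (fren_pr r A) = Some ((if j <? d then j else r (j - d) + d), d).
Proof.
  induction A; intros r j d H; simpl in *; try discriminate.
  - injection H as <- <-. destruct (Nat.ltb_spec X 0); [lia|].
    rewrite Nat.sub_0_r, Nat.add_0_r. reflexivity.
  - auto.
  - destruct (head_info A) as [[j' d']|] eqn:E; simpl in H; [|discriminate].
    injection H as <- <-. rewrite (IHA (uprn r) _ _ eq_refl). simpl.
    destruct (Nat.ltb_spec j' d'); destruct (Nat.ltb_spec j' (S d')); try lia.
    + reflexivity.
    + replace (j' - d') with 0 by lia. simpl. f_equal. f_equal. lia.
    + replace (j' - d') with (S (j' - S d')) by lia. simpl. f_equal. f_equal. lia.
  - destruct (head_info A) as [[j' d']|] eqn:E; simpl in H; [|discriminate].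
    injection H as <- <-. rewrite (IHA (uprn r) _ _ eq_refl). simpl.
    destruct (Nat.ltb_spec j' d'); destruct (Nat.ltb_spec j' (S d')); try lia.
    + reflexivity.
    + replace (j' - d') with 0 by lia. simpl. f_equal. f_equal. lia.
    + replace (j' - d') with (S (j' - S d')) by lia. simpl. f_equal. f_equal. lia.
Qed.

Lemma ttype_ren A : forall r j d, ttype A -> head_info A = Some (j,d) -> ttype (fren_pr r A).
Proof.
  induction A; intros r j d Ht H; simpl in *; try discriminate; auto.
  - eauto.
  - destruct (head_info A) as [[j' d']|] eqn:E; simpl in H; [|discriminate]. eauto.
  - destruct Ht as [Ht [Ho Hp]].
    destruct (head_info A) as [[j' d']|] eqn:E; simpl in H; [|discriminate].
    apply (Occ _ _ _ 0 E) in Ho.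
    assert (H0 : head_info (fren_pr (uprn r) A) = Some (j', d')).
    { rewrite (head_ren _ _ _ _ E). destruct (Nat.ltb_spec j' d'); [lia|].
      replace (j' - d') with 0 by lia. simpl. f_equal. f_equal. lia. }
    split; [eapply IHA; eauto|split].
    + apply (Occ _ _ _ 0 H0). lia.
    + apply polok_af. eapply head_some_af; eauto.
Qed.

Lemma Hpr A : forall t j d, head_info A = Some (j,d) ->
 (j < d -> head_info (fsubst_pr t A) = Some (j,d)) /\
 (forall k, d <= j -> t (j-d) = PV k -> head_info (fsubst_pr t A) = Some (k+d,d)) /\
 (forall n G a b, d <= j -> t (j-d) = PL n G -> head_info G = Some (a,b) -> a < b ->
    head_info (fsubst_pr t A) = Some (a, b+d)).
Proof.
  induction A; intros t j d H; simpl in H; try discriminate.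
  - injection H as <- <-. split; [intros; lia|split].
    + intros k _ Ht. rewrite Nat.sub_0_r in Ht. simpl. rewrite Ht. simpl.
      rewrite Nat.add_0_r. reflexivity.
    + intros n G a b _ Ht HG Hab. rewrite Nat.sub_0_r in Ht. simpl. rewrite Ht. simpl.
      rewrite head_fo, HG, Nat.add_0_r. reflexivity.
  - destruct (IHA (fun j => pshift_fo 1 (t j)) j d H) as [H1 [H2 H3]]. simpl. split; [|split].
    + exact H1.
    + intros k Hdj Ht. apply H2; auto. rewrite Ht. reflexivity.
    + intros m G a b Hdj Ht HG Hab.
      apply (H3 m (fsubst_fo (fun i => if i <? m then TVar i else TVar (i + 1)) G) a b); auto.
      * rewrite Ht; reflexivity.
      * rewrite head_fo; auto.
  - destruct (head_info A) as [[j' d']|] eqn:E; simpl in H; [|discriminate].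
    injection H as <- <-.
    destruct (IHA (up_pr t) j' d' eq_refl) as [H1 [H2 H3]]. simpl. split; [|split].
    + intros Hl. destruct (Nat.lt_ge_cases j' d').
      * rewrite H1; auto.
      * assert (j' = d') by lia; subst. rewrite (H2 0); auto. rewrite Nat.sub_diag; reflexivity.
    + intros k Hdj Ht.
      assert (E1 : up_pr t (j' - d') = PV (S k)) by
        (replace (j' - d') with (S (j' - S d')) by lia; simpl; rewrite Ht; reflexivity).
      rewrite (H2 (S k) ltac:(lia) E1). simpl. replace (k + S d') with (S k + d') by lia. reflexivity.
    + intros m G a b Hdj Ht HG Hab.
      assert (E1 : up_pr t (j' - d') = PL m (fren_pr S G)) by
        (replace (j' - d') with (S (j' - S d')) by lia; simpl; rewrite Ht; reflexivity).
      assert (E2 : head_info (fren_pr S G) = Some (a,b)) by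
        (rewrite (head_ren _ _ _ _ HG); destruct (Nat.ltb_spec a b); [reflexivity|lia]).
      rewrite (H3 m _ a b ltac:(lia) E1 E2 Hab). simpl.
      replace (b + S d') with (S (b + d')) by lia. reflexivity.
  - destruct (head_info A) as [[j' d']|] eqn:E; simpl in H; [|discriminate].
    injection H as <- <-.
    destruct (IHA (fun j => pshift_fo (length ts) (up_pr t j)) j' d' eq_refl) as [H1 [H2 H3]].
    simpl. split; [|split].
    + intros Hl. destruct (Nat.lt_ge_cases j' d').
      * rewrite H1; auto.
      * assert (j' = d') by lia; subst. rewrite (H2 0); auto. rewrite Nat.sub_diag; reflexivity.
    + intros k Hdj Ht.
      assert (E1 : pshift_fo (length ts) (up_pr t (j' - d')) = PV (S k)) by
        (replace (j' - d') with (S (j' - S d')) by lia; simpl; rewrite Ht; reflexivity).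
      rewrite (H2 (S k) ltac:(lia) E1). simpl. replace (k + S d') with (S k + d') by lia. reflexivity.
    + intros m G a b Hdj Ht HG Hab.
      assert (E1 : pshift_fo (length ts) (up_pr t (j' - d')) =
                   PL m (fsubst_fo (fun i => if i <? m then TVar i else TVar (i + length ts)) (fren_pr S G))) by
        (replace (j' - d') with (S (j' - S d')) by lia; simpl; rewrite Ht; reflexivity).
      assert (E2 : head_info (fsubst_fo (fun i => if i <? m then TVar i else TVar (i + length ts)) (fren_pr S G)) = Some (a,b)) by
        (rewrite head_fo, (head_ren _ _ _ _ HG); destruct (Nat.ltb_spec a b); [reflexivity|lia]).
      rewrite (H3 m _ a b ltac:(lia) E1 E2 Hab). simpl.
      replace (b + S d') with (S (b + d')) by lia. reflexivity.
Qed.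

Lemma sl_pr A : forall t j d, head_info A = Some (j,d) ->
  (j < d \/ exists k, t (j-d) = PV k) -> sl (fsubst_pr t A) = sl A.
Proof.
  induction A; intros t j d H C; simpl in H; try discriminate.
  - injection H as <- <-. destruct C as [C|[k C]]; [lia|]. simpl.
    rewrite Nat.sub_0_r in C. rewrite C. reflexivity.
  - simpl. f_equal. apply (IHA _ j d H).
    destruct C as [C|[k C]]; [left; auto| right; exists k; rewrite C; reflexivity].
  - destruct (head_info A) as [[j' d']|] eqn:E; simpl in H; [|discriminate].
    injection H as <- <-. simpl; f_equal. apply (IHA _ j' d' eq_refl).
    destruct (lt_eq_lt_dec j' d') as [[Hl|He]|Hg].
    + left; auto.
    + right; exists 0; subst; rewrite Nat.sub_diag; reflexivity.
    + destruct C as [C|[k C]]; [lia|]. right; exists (S k).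
      replace (j' - d') with (S (j' - S d')) by lia. simpl; rewrite C; reflexivity.
  - destruct (head_info A) as [[j' d']|] eqn:E; simpl in H; [|discriminate].
    injection H as <- <-. simpl; f_equal. apply (IHA _ j' d' eq_refl).
    destruct (lt_eq_lt_dec j' d') as [[Hl|He]|Hg].
    + left; auto.
    + right; exists 0; subst; rewrite Nat.sub_diag; reflexivity.
    + destruct C as [C|[k C]]; [lia|]. right; exists (S k).
      replace (j' - d') with (S (j' - S d')) by lia. simpl; rewrite C; reflexivity.
Qed.

Lemma ttype_pr A : forall t j d, ttype A -> head_info A = Some (j,d) ->
  (d <= j -> exists k, t (j-d) = PV k) -> ttype (fsubst_pr t A).
Proof.
  induction A; intros t j d Ht H C; simpl in H; try discriminate.
  - injection H as <- <-. destruct (C (le_0_n _)) as [k Ck]. rewrite Nat.sub_0_r in Ck.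
    simpl. rewrite Ck. simpl. exact I.
  - simpl. apply (IHA _ j d); auto. intros Hd. destruct (C Hd) as [k Ck]. exists k.
    rewrite Ck; reflexivity.
  - simpl in Ht. destruct (head_info A) as [[j' d']|] eqn:E; simpl in H; [|discriminate].
    injection H as <- <-. simpl. apply (IHA _ j' d' Ht eq_refl).
    intros Hd. destruct (Nat.eq_dec j' d').
    + subst; exists 0; rewrite Nat.sub_diag; reflexivity.
    + destruct (C ltac:(lia)) as [k Ck]. exists (S k).
      replace (j' - d') with (S (j' - S d')) by lia. simpl; rewrite Ck; reflexivity.
  - simpl in Ht. destruct Ht as [Ht1 [Ho Hp]].
    destruct (head_info A) as [[j' d']|] eqn:E; simpl in H; [|discriminate].
    injection H as <- <-. apply (Occ _ _ _ 0 E) in Ho. simpl in Ho. subst j'.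
    assert (E1 : pshift_fo (length ts) (up_pr t (d' - d')) = PV 0) by
        (rewrite Nat.sub_diag; reflexivity).
    assert (Hh : head_info (fsubst_pr (fun j => pshift_fo (length ts) (up_pr t j)) A) = Some (0 + d', d'))
      by exact (proj1 (proj2 (Hpr A _ d' d' E)) 0 (le_n _) E1).
    simpl. split; [|split].
    + apply (IHA _ d' d' Ht1 eq_refl). intros _. exists 0. exact E1.
    + apply (Occ _ _ _ 0 Hh). reflexivity.
    + apply polok_af. eapply head_some_af; eauto.
Qed.

Fixpoint spZn (k : nat) (A : formula) : Prop :=
  match k with
  | 0 => A = Zf
  | S k => (exists A', A = FAll A' /\ spZn k A') \/ (exists m A', A = PAll m A' /\ spZn k A')
  end.

Lemma spZn_fo k : forall A s, spZn k A -> spZn k (fsubst_fo s A).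
Proof.
  induction k; intros A s H; simpl in *.
  - subst; reflexivity.
  - destruct H as [[A' [-> HA]]|[m [A' [-> HA]]]]; simpl.
    + left; eexists; split; [reflexivity|apply IHk; exact HA].
    + right; exists m; eexists; split; [reflexivity|apply IHk; exact HA].
Qed.

Lemma spZn_pr k : forall A t, spZn k A -> spZn k (fsubst_pr t A).
Proof.
  induction k; intros A t H; simpl in *.
  - subst; reflexivity.
  - destruct H as [[A' [-> HA]]|[m [A' [-> HA]]]]; simpl.
    + left; eexists; split; [reflexivity|apply IHk; exact HA].
    + right; exists m; eexists; split; [reflexivity|apply IHk; exact HA].
Qed.

Lemma spZ_of A : forall t j d m, ttype A -> head_info A = Some (j,d) -> d <= j ->
  t (j-d) = PL m Zf -> exists k, spZn k (fsubst_pr t A).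
Proof.
  induction A; intros t j d m Ht H Hd Htt; simpl in H; try discriminate.
  - injection H as <- <-. rewrite Nat.sub_0_r in Htt. exists 0. simpl. rewrite Htt. reflexivity.
  - destruct (IHA (fun j => pshift_fo 1 (t j)) j d m Ht H Hd) as [k Hk].
    + rewrite Htt; reflexivity.
    + exists (S k); simpl; left; eexists; split; [reflexivity|exact Hk].
  - simpl in Ht. destruct (head_info A) as [[j' d']|] eqn:E; simpl in H; [|discriminate].
    injection H as <- <-.
    destruct (IHA (up_pr t) j' d' m Ht eq_refl ltac:(lia)) as [k Hk].
    + replace (j' - d') with (S (j' - S d')) by lia. simpl; rewrite Htt; reflexivity.
    + exists (S k); simpl; right; exists n; eexists; split; [reflexivity|exact Hk].
  - simpl in Ht. destruct Ht as [_ [Ho _]].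
    destruct (head_info A) as [[j' d']|] eqn:E; simpl in H; [|discriminate].
    injection H as <- <-. apply (Occ _ _ _ 0 E) in Ho. lia.
Qed.

Lemma Z_sub Eqs B : ttype B -> sub Eqs Zf B.
Proof.
  intros HB. apply (St_pall_l Eqs 0 (PAt 0 []) B B HB). simpl.
  rewrite fsubst_fo_id; [apply St_refl; auto|].
  intro i; unfold inst_args; simpl. rewrite Nat.sub_0_r. reflexivity.
Qed.

Lemma spZ_sub Eqs k : forall A B, spZn k A -> ttype B -> sub Eqs A B.
Proof.
  induction k; intros A B H HB; simpl in H.
  - subst; apply Z_sub; auto.
  - destruct H as [[A' [-> HA]]|[m [A' [-> HA]]]].
    + apply (St_fall_l Eqs A' B (TVar 0)). apply IHk; [apply spZn_fo; auto|auto].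
    + apply (St_pall_l Eqs m A' B Zf I). apply IHk; [apply spZn_pr; auto|auto].
Qed.

Lemma Lmain Eqs n : forall A, sl A <= n -> ttype A -> forall j d, head_info A = Some (j,d) ->
  j < d -> forall B, ttype B -> sub Eqs A B.
Proof.
  induction n; intros A Hs Ht j d Hh Hjd B HB; destruct A; simpl in Hs, Hh;
    try discriminate; try (inversion Hh; subst; lia); try lia.
  - apply (St_fall_l Eqs A B (TVar 0)).
    apply IHn with (j := j) (d := d);
      [rewrite sl_fo; lia | rewrite ttype_fo; exact Ht | rewrite head_fo; exact Hh | exact Hjd | exact HB].
  - simpl in Ht.
    destruct (head_info A) as [[j' d']|] eqn:E; simpl in Hh; [|discriminate].
    injection Hh as <- <-.
    apply (St_pall_l Eqs n0 A B Zf I).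
    destruct (Nat.lt_ge_cases j' d') as [Hl|Hg].
    + apply IHn with (j := j') (d := d').
      * rewrite (sl_pr A _ j' d' E (or_introl Hl)); lia.
      * apply (ttype_pr A _ j' d' Ht E); intros; lia.
      * apply (proj1 (Hpr A _ j' d' E) Hl).
      * exact Hl.
      * exact HB.
    + assert (Et : instp n0 Zf (j' - d') = PL n0 Zf) by
        (replace (j' - d') with 0 by lia; reflexivity).
      destruct (spZ_of A (instp n0 Zf) j' d' n0 Ht E Hg Et) as [k Hk].
      apply (spZ_sub Eqs k); auto.
  - pose proof Ht as Ht0. simpl in Ht. destruct Ht as [Ht1 [Ho Hp]].
    destruct (head_info A) as [[j' d']|] eqn:E; simpl in Hh; [|discriminate].
    injection Hh as <- <-. pose proof (proj1 (Occ _ _ _ 0 E) Ho) as Ho2. simpl in Ho2.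
    apply St_trans with (B := fsubst_fo (inst_args (length ts) ts) Zf).
    + apply St_ind; [exact Ht0 | exact I |].
      unfold mu_ind_body.
      match goal with |- sub _ (fsubst_pr ?t A) _ =>
        assert (Et : t (j' - d') = PL (length ts) Zf) by
          (replace (j' - d') with 0 by lia; reflexivity);
        destruct (spZ_of A t j' d' (length ts) Ht1 E ltac:(lia) Et) as [k Hk];
        exact (spZ_sub Eqs k _ Zf Hk I)
      end.
    + simpl. apply Z_sub; auto.
Qed.

Lemma mk_kind1 A j d : ttype A -> head_info A = Some (j,d) -> d <= j -> kind1 A.
Proof.
  intros Ht H Hd. split; [split; [auto| eapply head_some_af; eauto] | exists j, d; auto].
Qed.

Lemma part1 Eqs : forall A B, sub Eqs A B -> kind1 A -> kind1 B /\ At A = At B.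
Proof.
  induction 1; intro Hk.
  - split; auto.
  - destruct Hk as [[_ Haf] _]; simpl in Haf; contradiction.
  - destruct Hk as [[Ht _] [j [d [Hh Hd]]]]. simpl in Ht, Hh.
    assert (K: kind1 (fsubst_fo (inst1 u) A)) by
      (apply (mk_kind1 _ j d); [rewrite ttype_fo; auto | rewrite head_fo; auto | auto]).
    destruct (IHsub K) as [K1 K2]. split; auto. rewrite <- K2. unfold At. simpl.
    rewrite head_fo. reflexivity.
  - destruct Hk as [[Ht _] [j [d [Hh Hd]]]]. simpl in Ht, Hh.
    destruct (head_info A) as [[j' d']|] eqn:E; simpl in Hh; [|discriminate].
    injection Hh as <- <-.
    assert (Et : instp n G (j' - d') = PV (j' - S d')) by
      (replace (j' - d') with (S (j' - S d')) by lia; reflexivity).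
    pose proof (proj1 (proj2 (Hpr A (instp n G) j' d' E)) _ ltac:(lia) Et) as Hh2.
    assert (K: kind1 (fsubst_pr (instp n G) A)).
    { apply (mk_kind1 _ _ _ (ttype_pr A (instp n G) j' d' Ht E (fun _ => ex_intro _ _ Et)) Hh2). lia. }
    destruct (IHsub K) as [K1 K2]. split; auto. rewrite <- K2. unfold At. simpl.
    rewrite E, Hh2. simpl. f_equal. lia.
  - destruct Hk as [[Ht _] [j [d [Hh Hd]]]].
    assert (K: kind1 (fshift_fo A)) by
      (unfold fshift_fo; apply (mk_kind1 _ j d); [rewrite ttype_fo; auto | rewrite head_fo; auto | auto]).
    destruct (IHsub K) as [K1 K2].
    destruct K1 as [[HtB _] [j2 [d2 [HhB Hd2]]]]. split.
    + apply (mk_kind1 _ j2 d2); simpl; auto.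
    + transitivity (At B); [|reflexivity]. rewrite <- K2. unfold At, fshift_fo. rewrite head_fo. reflexivity.
  - destruct Hk as [[Ht _] [j [d [Hh Hd]]]].
    pose proof (head_ren A S j d Hh) as HH.
    destruct (Nat.ltb_spec j d); [lia|].
    assert (K: kind1 (fshift_pr A)).
    { unfold fshift_pr. apply (mk_kind1 _ (S (j - d) + d) d (ttype_ren A S j d Ht Hh) HH). lia. }
    destruct (IHsub K) as [K1 K2].
    destruct K1 as [[HtB _] [j2 [d2 [HhB Hd2]]]].
    unfold At, fshift_pr in K2. rewrite HH, HhB in K2. assert (K3 : S (j - d) + d - d = j2 - d2) by (injection K2; auto).
    split.
    + apply (mk_kind1 _ j2 (S d2)); [simpl; exact HtB| simpl; rewrite HhB; reflexivity | lia].
    + unfold At; simpl; rewrite Hh, HhB; simpl; f_equal; lia.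
  - destruct (IHsub Hk) as [[[Ht _] [j [d [Hh Hd]]]] K2].
    rewrite ttype_fo in Ht; rewrite head_fo in Hh. split.
    + apply (mk_kind1 _ j d); [rewrite ttype_fo|rewrite head_fo|]; auto.
    + rewrite K2; unfold At; rewrite !head_fo; reflexivity.
  - destruct (IHsub1 Hk) as [K1 E1]; destruct (IHsub2 K1) as [K2 E2]; split; congruence.
  - exfalso. destruct Hk as [_ [j [d [Hh Hd]]]]. unfold mu_unfold in Hh. cbv zeta in Hh.
    rewrite head_fo in Hh. simpl in H. destruct H as [_ [Ho _]].
    destruct (head_info D) as [[j1 d1]|] eqn:E.
    + apply (Occ _ _ _ 0 E) in Ho. simpl in Ho. subst j1.
      match goal with Hh : head_info (fsubst_pr ?t D) = _ |- _ =>
        match eval hnf in (t 0) with PL ?n ?G =>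
          assert (Et : t (d1 - d1) = PL n G) by (rewrite Nat.sub_diag; reflexivity);
          assert (HG : head_info G = Some (d1, S d1)) by (simpl; rewrite head_fo, E; reflexivity);
          rewrite (proj2 (proj2 (Hpr D t d1 d1 E)) n G d1 (S d1) (le_n _) Et HG (Nat.lt_succ_diag_r _)) in Hh
        end
      end.
      injection Hh as <- <-. lia.
    + rewrite head_pr_none in Hh; auto. discriminate.
  - exfalso. destruct Hk as [_ [j [d [Hh Hd]]]]. simpl in Hh, H. destruct H as [_ [Ho _]].
    destruct (head_info D) as [[j1 d1]|] eqn:HE; simpl in Hh; [injection Hh as <- <-|discriminate].
    apply (Occ _ _ _ 0 HE) in Ho. lia.
  - exfalso. destruct Hk as [_ [j [d [Hh Hd]]]]. simpl in Hh, H. destruct H as [_ [Ho _]].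
    destruct (head_info D) as [[j1 d1]|] eqn:HE; simpl in Hh; [injection Hh as <- <-|discriminate].
    apply (Occ _ _ _ 0 HE) in Ho. lia.
Qed.

Theorem lemma4p4 (Eqs : term -> term -> Prop) :
  (forall A B : formula, ttype A -> ttype B ->
     kind1 A -> sub Eqs A B -> kind1 B /\ At A = At B) /\
  (forall A B : formula, ttype A -> ttype B ->
     kind2 A -> sub Eqs A B).
Proof.
  split.
  - intros A B _ _ Hk Hs. exact (part1 Eqs A B Hs Hk).
  - intros A B HA HB [[Ht _] [j [d [Hh Hjd]]]].
    exact (Lmain Eqs (sl A) A (le_n _) Ht j d Hh Hjd B HB).
Qed.
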